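(* Consider $n$ flows sharing a server that performs interleaved weighted round robin (IWRR) with positive integer weights $w_1,\dots,w_n$, and fix a flow of interest $f_i$. Then for every backlogged period $(s,t]$ of $f_i$ and every $j\neq i$, \[ \frac{D_i(s,t)}{w_i l_i^{\min}} \;\geq\; \frac{\big[D_j(s,t)-w_j l_j^{\max}\big]^+}{w_j l_j^{\max}}, \] i.e. IWRR is a bandwidth-sharing policy for $f_i$ with the same weights $\phi_i'=w_i l_i^{\min}$, $\phi_j'=w_j l_j^{\max}$ ($j\ne i$) and penalty terms $H_{ij}'=w_j l_j^{\max}\mathbb{1}_{\{i\neq j\}}$ as for WRR.
   Context: Each flow $f_k$ sends packets with sizes in $[l_k^{\min},l_k^{\max}]$, $0<l_k^{\min}\le l_k^{\max}$, queued FIFO in a per-flow queue. IWRR: let $w_{\max}=\max_k w_k$. The server runs rounds forever; each round consists of cycles $c=1,\dots,w_{\max}$; in cycle $c$ the server visits flows $k=1,\dots,n$ in order and, if queue $k$ is nonempty and $c\le w_k$, transmits (non-preemptively) exactly one packet from the head of queue $k$. $D_k(t)$ is the cumulative data of flow $k$ that has left the server in $[0,t)$, $A_k(t)$ the cumulative arrivals, $D_k\le A_k$, $D_k(s,t):=D_k(t)-D_k(s)$. An interval $(s,t]$ is a backlogged period of $f_i$ if $D_i(\tau)<A_i(\tau)$ for all $\tau\in(s,t]$. $[x]^+:=\max\{x,0\}$. A server has a bandwidth-sharing policy if there exist weights $\phi_k>0$ and numbers $H_{ij}\ge0$ such that for every backlogged period $(s,t]$ of $f_i$ and all $j\neq i$: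 $D_i(s,t)/\phi_i\ge[D_j(s,t)-H_{ij}]^+/\phi_j$. *)

(* Defs.v *)
From HB Require Import structures.
From mathcomp Require Import all_boot all_order all_algebra.
From mathcomp Require Import boolp reals.
Set Implicit Arguments. Unset Strict Implicit. Unset Printing Implicit Defensive.
Import Order.TTheory GRing.Theory Num.Theory.
Local Open Scope ring_scope.

(* Service slots are numbered m = 0,1,2,...: slot m is the visit of flow
   (m %% n) in cycle ((m %/ n) %% wmax) (0-based, i.e. paper's cycle c is this
   index + 1) of round (m %/ (n * wmax)). *)
Record iwrr (R : realType) (n : nat) := IWRR {
  w    : 'I_n -> nat;
  lmin : 'I_n -> R;
  lmax : 'I_n -> R;
  np   : 'I_n -> nat;          (* number of packets of flow k *)
  arr  : 'I_n -> nat -> R;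
  len  : 'I_n -> nat -> R;
  vis  : nat -> R;             (* time at which slot m (the visit) happens *)
  fin  : nat -> R;             (* end of transmission started at slot m *)
  tx   : nat -> bool
}.

Section Defs.
Variables (R : realType) (n : nat) (T : iwrr R n).

Definition wmax : nat := \max_(k < n) w T k.

Definition eligible (k : 'I_n) (m : nat) : bool :=
  (m %% n == k)%N && ((m %/ n) %% wmax < w T k)%N.

Definition served_before (k : 'I_n) (m : nat) : nat :=
  count (fun m' => (m' %% n == k)%N && tx T m') (iota 0 m).

Definition arrived_upto (k : 'I_n) (x : R) : nat :=
  count (fun p => arr T k p <= x) (iota 0 (np T k)).

Definition valid : Prop :=
     (forall k, (0 < w T k)%N) /\
      (forall k, 0 < lmin T k /\ lmin T k <= lmax T k) /\
      (forall k p, (p < np T k)%N -> lmin T k <= len T k p <= lmax T k) /\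
      (forall k p, (p < np T k)%N -> 0 <= arr T k p) /\
      (* FIFO per-flow queue: packets are queued in arrival order *)
      (forall k p q, (p <= q)%N -> (q < np T k)%N -> arr T k p <= arr T k q) /\
      (* IWRR rule: at slot m (visit of flow k = m %% n in cycle c), one packet
         (the head of queue k) is sent iff c <= w_k and queue k is nonempty *)
      (forall m (k : 'I_n), (m %% n)%N = k ->
          tx T m = ((m %/ n) %% wmax < w T k)%N &&
                   (served_before k m < arrived_upto k (vis T m))%N) /\
      0 <= vis T 0 /\
      (forall m, vis T m <= fin T m) /\
      (* non-preemptive, sequential service: next visit after the current
         transmission (if any) has finished *)
      (forall m, (if tx T m then fin T m else vis T m) <= vis T m.+1).

Definition departed (k : 'I_n) (p : nat) (t : R) : Prop :=
  exists m, [/\ tx T m, (m %% n)%N = k, served_before k m = p & fin T m < t].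

Definition D (k : 'I_n) (t : R) : R :=
  \sum_(p < np T k | `[< departed k p t >]) len T k p.
Definition A (k : 'I_n) (t : R) : R :=
  \sum_(p < np T k | arr T k p < t) len T k p.

Definition Dint (k : 'I_n) (s t : R) : R := D k t - D k s.

Definition backlogged_period (k : 'I_n) (s t : R) : Prop :=
  s <= t /\ forall tau, s < tau -> tau <= t -> D k tau < A k tau.

End Defs.

Definition pos_part (R : realType) (x : R) : R := Num.max x 0.

(* Main.v *)
Require Import Defs.
From HB Require Import structures.
From mathcomp Require Import all_boot all_order all_algebra.
From mathcomp Require Import boolp reals.
From mathcomp Require Import zify ring lra.
Import Order.TTheory GRing.Theory Num.Theory.
Lemma count_iotaS (P : pred nat) m : count P (iota 0 m.+1) = count P (iota 0 m) + P m.
Proof. by rewrite -addn1 iotaD count_cat /= addn0 add0n. Qed.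

Lemma cntG (W w : nat) : w <= W -> 0 < W -> forall a r, r <= W ->
  count (fun c => c %% W < w) (iota 0 (a*W + r)) = a*w + minn r w.
Proof.
move=> hw hW a; elim: a => [|a IH] r hr.
  elim: r hr => [|r IHr] hr; first by rewrite /=; lia.
  rewrite mul0n add0n count_iotaS.
  rewrite mul0n add0n in IHr. rewrite IHr; last by lia.
  rewrite modn_small; last by lia. lia.
elim: r hr => [|r IHr] hr.
  have -> : a.+1 * W + 0 = a * W + W by lia.
  rewrite IH //. lia.
rewrite addnS count_iotaS IHr; last by lia.
rewrite modnMDl modn_small; last by lia. lia.
Qed.

Lemma cntS (n k : nat) (Q : pred nat) : k < n -> forall c p, p <= n ->
  count (fun m => (m %% n == k) && Q (m %/ n)) (iota 0 (c*n + p)) =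
  count Q (iota 0 c) + ((k < p) && Q c).
Proof.
move=> hk c; elim: c => [|c IH] p hp.
  elim: p hp => [|p IHp] hp; first by rewrite /=; lia.
  rewrite mul0n add0n count_iotaS.
  rewrite mul0n add0n in IHp. rewrite IHp; last by lia.
  rewrite modn_small; last by lia. rewrite divn_small; last by lia.
  rewrite /=. case: (Q 0); rewrite /=; case: (ltngtP k p) => h; rewrite ?h /=; lia.
elim: p hp => [|p IHp] hp.
  have -> : c.+1 * n + 0 = c * n + n by lia.
  rewrite IH // count_iotaS hk /=. lia.
rewrite addnS count_iotaS IHp; last by lia.
rewrite modnMDl modn_small; last by lia.
rewrite divnMDl; last by lia. rewrite divn_small; last by lia. rewrite addn0.
case: (Q c.+1); rewrite /=; case: (ltngtP k p) => h; rewrite ?h /=; lia.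
Qed.

Lemma count_iota_sub (P : pred nat) a b : a <= b ->
  count P (iota a (b - a)) = count P (iota 0 b) - count P (iota 0 a).
Proof.
move=> hab; have E : iota 0 b = iota 0 a ++ iota a (b - a) by rewrite -iotaD subnKC.
rewrite E count_cat; lia.
Qed.

Lemma key_arith (n W wi wj i j m1 m2 : nat) :
  0 < n -> 0 < wi -> 0 < wj -> wi <= W -> wj <= W -> i < n -> j < n -> i != j ->
  m1 <= m2 ->
  (m1 %% n == j) && ((m1 %/ n) %% W < wj) ->
  (m2 %% n == j) && ((m2 %/ n) %% W < wj) ->
  wi * (count (fun m => (m %% n == j) && ((m %/ n) %% W < wj)) (iota m1 (m2.+1 - m1)) - wj)
  <= wj * count (fun m => (m %% n == i) && ((m %/ n) %% W < wi)) (iota m1.+1 (m2 - m1.+1)).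
Proof.
move=> hn hwi hwj hWi hWj hi hj hij hm.
case: (ltngtP m1 m2) hm => // [hm _|-> _ _ _]; last first.
  have -> : m2.+1 - m2 = 1 by lia.
  rewrite /=; case: (_ && _); rewrite /=; lia.
move=> /andP[/eqP e1 c1] /andP[/eqP e2 c2].
have hW : 0 < W by lia.
have dm1 := divn_eq m1 n; have dm2 := divn_eq m2 n.
set C1 := m1 %/ n in c1 dm1; set C2 := m2 %/ n in c2 dm2.
rewrite e1 in dm1; rewrite e2 in dm2.
have hC : C1 <= C2.
  have : C1 * n <= C2 * n by lia.
  by rewrite leq_pmul2r.
have dC1 := divn_eq C1 W; have dC2 := divn_eq C2 W.
set a1 := C1 %/ W in dC1; set a2 := C2 %/ W in dC2.
set r1 := C1 %% W in c1 dC1; set r2 := C2 %% W in c2 dC2.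
have hr1 : r1 < W by rewrite ltn_mod. have hr2 : r2 < W by rewrite ltn_mod.
have ha : a1 <= a2.
  have : a1 <= C2 %/ W. rewrite /a1. by apply: leq_div2r.
  by [].
rewrite !count_iota_sub; [|lia|lia].
have -> : m2.+1 = C2 * n + j.+1 by lia.
have -> : m1.+1 = C1 * n + j.+1 by lia.
have -> : m1 = C1 * n + j by lia.
have -> : m2 = C2 * n + j by lia.
rewrite !(@cntS n j (fun c => c %% W < wj)) // ?(ltnW hj) //.
rewrite !(@cntS n i (fun c => c %% W < wi)) // ?(ltnW hj) //.
rewrite ltnn ltnSn /= -/r2 c2 /=.
have -> : (i < j.+1) = (i < j) by by rewrite ltnS leq_eqVlt (negbTE hij).
rewrite -/r1 -/r2.
have g1 := @cntG W wj hWj hW a1 r1 (ltnW hr1).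
have g2 := @cntG W wj hWj hW a2 r2 (ltnW hr2).
have g3 := @cntG W wi hWi hW a1 r1 (ltnW hr1).
have g4 := @cntG W wi hWi hW a2 r2 (ltnW hr2).
rewrite -dC1 in g1 g3; rewrite -dC2 in g2 g4.
rewrite g1 g2 g3 g4.
have hCC : a1 * W + r1 < a2 * W + r2.
  rewrite -dC1 -dC2 ltn_neqAle hC andbT.
  apply/negP => /eqP E. move: hm; rewrite dm1 dm2 E. lia.
clear dm1 dm2 e1 e2 hm g1 g2 g3 g4 dC1 dC2 hC.
clearbody a1 a2 r1 r2. clear C1 C2.
rewrite (minn_idPl (ltnW c1)) (minn_idPl (ltnW c2)) addn0.
have [d Ed] : exists d, a2 = a1 + d by exists (a2 - a1); lia.
subst a2. rewrite !mulnDl in hCC *.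
clear ha. case: d hCC => [|d] hCC.
  have -> : a1 * wj + 0 * wj + r2 + 1 - (a1 * wj + r1) - wj = 0.
    move: c2; clear; lia.
  by rewrite muln0.
rewrite mulSn.
have E1 : a1 * wj + (wj + d * wj) + r2 + 1 - (a1 * wj + r1) - wj = d * wj + r2 + 1 - r1 by lia.
rewrite E1; clear E1.
case: (i < j) => /=; case: (ltnP r1 wi) => h1; case: (ltnP r2 wi) => h2;
  rewrite ?(minn_idPl (ltnW h1)) ?(minn_idPl (ltnW h2)) ?(minn_idPr h1) ?(minn_idPr h2) /=.
all: clear hCC; nia.
Qed.

Lemma count_dc (P : pred nat) N : (forall p q, p <= q -> q < N -> P q -> P p) ->
  forall p, p < N -> (p < count P (iota 0 N)) = P p.
Proof.
elim: N => [|N IH] hdc p hp //.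
rewrite count_iotaS.
case HN: (P N) => /=.
  have call : count P (iota 0 N) = N.
    apply/eqP; rewrite -[X in _ == X](size_iota 0 N) -all_count.
    apply/allP => q; rewrite mem_iota add0n => /andP[_ hq].
    apply: (hdc q N); [exact: ltnW | by [] | by rewrite HN].
  rewrite call addn1 hp; symmetry.
  apply: (hdc p N); [by rewrite -ltnS | by [] | by rewrite HN].
rewrite addn0; have [hpN|->] : (p < N \/ p = N)%N by lia.
  rewrite IH // => a b hab hb; apply: hdc => //; exact: ltnW.
rewrite HN; apply/negbTE; rewrite -leqNgt.
by rewrite -[X in _ <= X](size_iota 0 N) count_size.
Qed.

Lemma mid_range a b x : a <= b -> a.+1 <= x < a.+1 + (b - a.+1) -> a < x /\ x < b.
Proof. lia. Qed.

Local Open Scope ring_scope.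

Lemma sum_seq_bounds (R : realType) (r : seq nat) (Q : pred nat) (f : nat -> R) lo hi :
  (forall x, x \in r -> lo <= f x <= hi) ->
  (count Q r)%:R * lo <= \sum_(x <- r | Q x) f x <= (count Q r)%:R * hi.
Proof.
elim: r => [|x r IH] hb; first by rewrite big_nil /= !mul0r lexx.
have /andP[IH1 IH2] := IH (fun y hy => hb y (@mem_behead _ (x :: r) y hy)).
have /andP[h1 h2] := hb x (mem_head _ _).
rewrite big_cons /=; case: (Q x) => /=.
  rewrite natrD mulrDl mulrDl !mul1r; apply/andP; split; apply: lerD => //.
by rewrite add0n IH1 IH2.
Qed.

Lemma sum_ord_bounds (R : realType) N (Q : pred nat) (f : nat -> R) lo hi :
  (forall x, (x < N)%N -> lo <= f x <= hi) ->
  (count Q (iota 0 N))%:R * lo <= \sum_(x < N | Q x) f x <= (count Q (iota 0 N))%:R * hi.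
Proof.
move=> hb; rewrite -(big_mkord Q f) /index_iota subn0.
apply: sum_seq_bounds => x; rewrite mem_iota add0n => /andP[_ h]; exact: hb.
Qed.

Section Sys.
Variables (R : realType) (n : nat) (T : iwrr R n).
Hypothesis HT : valid T.

Lemma sbS (k : 'I_n) m : served_before T k m.+1 =
  (served_before T k m + ((m %% n == k) && tx T m))%N.
Proof. by rewrite /served_before count_iotaS. Qed.


Lemma sb_mono (k : 'I_n) m m' : (m <= m')%N -> (served_before T k m <= served_before T k m')%N.
Proof.
move=> h; rewrite -(subnKC h); elim: (m' - m)%N => [|d IH]; first by rewrite addn0.
rewrite addnS sbS; lia.
Qed.

Lemma sb_lt (k : 'I_n) m m' : (m < m')%N -> tx T m -> (m %% n)%N = k ->
  (served_before T k m < served_before T k m')%N.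
Proof.
move=> h htx hk; apply: (leq_trans _ (sb_mono k _ _ h)).
by rewrite sbS hk eqxx htx addn1.
Qed.

Lemma sb_inj (k : 'I_n) m m' : tx T m -> (m %% n)%N = k -> tx T m' -> (m' %% n)%N = k ->
  served_before T k m = served_before T k m' -> m = m'.
Proof.
move=> h1 k1 h2 k2 e; case: (ltngtP m m') => // hlt.
  by have := sb_lt _ _ _ hlt h1 k1; rewrite e ltnn.
by have := sb_lt _ _ _ hlt h2 k2; rewrite e ltnn.
Qed.

Lemma sb_nth (k : 'I_n) m p : (p < served_before T k m)%N ->
  exists m'', [/\ (m'' < m)%N, tx T m'', (m'' %% n)%N = k & served_before T k m'' = p].
Proof.
elim: m => [|m IH]; first by rewrite /served_before.
rewrite sbS; case E: (((m %% n)%N == k) && tx T m) => /=; last first.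
  by rewrite addn0 => /IH [m'' [h1 h2 h3 h4]]; exists m''; split => //; apply: ltnW; rewrite ltnS.
rewrite addn1 ltnS leq_eqVlt => /orP [/eqP ->|/IH [m'' [h1 h2 h3 h4]]].
  by move/andP: E => [/eqP e h]; exists m; split.
by exists m''; split => //; apply: ltnW; rewrite ltnS.
Qed.

Lemma visS m : vis T m <= vis T m.+1.
Proof.
case: HT => _ [_ [_ [_ [_ [_ [_ [hf hn]]]]]]].
have := hn m; case: (tx T m) => // h; exact: le_trans (hf m) h.
Qed.

Lemma vis_mono m m' : (m <= m')%N -> vis T m <= vis T m'.
Proof.
move=> h; rewrite -(subnKC h); elim: (m' - m)%N => [|d IH]; first by rewrite addn0.
by rewrite addnS; apply: le_trans IH (visS _).
Qed.

Lemma fin_vis m m' : tx T m -> (m < m')%N -> fin T m <= vis T m'.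
Proof.
case: HT => _ [_ [_ [_ [_ [_ [_ [hf hn]]]]]]] htx h.
have := hn m; rewrite htx => h1; apply: le_trans h1 _; exact: vis_mono.
Qed.

Lemma vis_fin m : vis T m <= fin T m.
Proof. by case: HT => _ [_ [_ [_ [_ [_ [_ [hf hn]]]]]]]. Qed.

Lemma arrivedP (k : 'I_n) x p : (p < np T k)%N ->
  (p < arrived_upto T k x)%N = (arr T k p <= x).
Proof.
case: HT => _ [_ [_ [_ [hfifo _]]]] hp.
rewrite /arrived_upto (@count_dc (fun p => arr T k p <= x)) //.
move=> a b hab hb /= hbx; apply: le_trans hbx; exact: hfifo.
Qed.

Lemma tx_rule (k : 'I_n) m : (m %% n)%N = k -> tx T m =
  ((m %/ n) %% wmax T < w T k)%N && (served_before T k m < arrived_upto T k (vis T m))%N.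
Proof. by case: HT => _ [_ [_ [_ [_ [hr _]]]]]; apply: hr. Qed.

Lemma tx_elig (k : 'I_n) m : tx T m -> (m %% n)%N = k -> eligible T k m.
Proof.
move=> h e; move: h; rewrite (tx_rule _ _ e) /eligible e eqxx /= => /andP[] //.
Qed.

Lemma arrived_le (k : 'I_n) x : (arrived_upto T k x <= np T k)%N.
Proof. by rewrite /arrived_upto -[X in (_ <= X)%N](size_iota 0 (np T k)) count_size. Qed.

Lemma tx_pkt (k : 'I_n) m : tx T m -> (m %% n)%N = k ->
  (served_before T k m < np T k)%N /\ arr T k (served_before T k m) <= vis T m.
Proof.
move=> h e; move: h; rewrite (tx_rule _ _ e) => /andP[_ h].
have hnp : (served_before T k m < np T k)%N := leq_trans h (arrived_le _ _).
by split => //; rewrite -arrivedP.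
Qed.


Lemma busy (i : 'I_n) s t m : backlogged_period T i s t -> eligible T i m ->
  s <= vis T m -> vis T m < t -> tx T m.
Proof.
case: HT => _ [_ [_ [_ [hfifo _]]]].
move=> [hst hb] /andP[/eqP hmi hc] hs ht.
rewrite (tx_rule _ _ hmi) hc /=.
rewrite ltnNge; apply/negP => hge.
set c := arrived_upto T i (vis T m) in hge *.
have hcvis : (c < np T i)%N -> vis T m < arr T i c.
  by move=> hc'; rewrite ltNge -arrivedP // ltnn.
pose tau := if (c < np T i)%N then Num.min t (arr T i c) else t.
have htau1 : vis T m < tau.
  rewrite /tau; case: ifP => // hcn; rewrite lt_min ht /=; exact: hcvis.
have htau2 : tau <= t.
  rewrite /tau; case: ifP => // hcn; rewrite ge_min lexx //.
have := hb tau (le_lt_trans hs htau1) htau2.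
suff -> : D T i tau = A T i tau by rewrite ltxx.
rewrite /D /A; apply: eq_bigl => p.
apply/asboolP/idP.
  move=> [m'' [htx hk hsb hfin]].
  have [hnp harr] := tx_pkt _ _ htx hk; rewrite hsb in harr.
  exact: le_lt_trans harr (le_lt_trans (vis_fin m'') hfin).
move=> harr.
have hpc : (p < c)%N.
  rewrite ltnNge; apply/negP => hcp.
  have hcn : (c < np T i)%N := leq_ltn_trans hcp (ltn_ord p).
  have h1 : arr T i c <= arr T i p := hfifo i c p hcp (ltn_ord p).
  have : tau <= arr T i c by rewrite /tau hcn ge_min lexx orbT.
  move=> h2; have := lt_le_trans harr (le_trans h2 h1); by rewrite ltxx.
have [m'' [h1 h2 h3 h4]] := sb_nth _ _ _ (leq_trans hpc hge).
exists m''; split => //.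
exact: le_lt_trans (fin_vis _ _ h2 h1) htau1.
Qed.


Lemma dep_mono (k : 'I_n) p s t : s <= t -> departed T k p s -> departed T k p t.
Proof. by move=> hst [m [h1 h2 h3 h4]]; exists m; split => //; exact: lt_le_trans hst. Qed.

Definition inW (k : 'I_n) s t (p : nat) : bool :=
  `[< departed T k p t >] && ~~ `[< departed T k p s >].

Lemma Dint_sum (k : 'I_n) s t : s <= t ->
  Dint T k s t = \sum_(p < np T k | inW k s t p) len T k p.
Proof.
move=> hst; rewrite /Dint /D (bigID (fun p : 'I_(np T k) => `[< departed T k p s >])) /=.
have -> : \sum_(i0 < np T k | `[< departed T k i0 t >] && `[< departed T k i0 s >]) len T k i0 =
   \sum_(p < np T k | `[< departed T k p s >]) len T k p.
  apply: eq_bigl => p; apply/andP/idP => [[] //|h]; split => //.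
  apply/asboolP; apply: (dep_mono _ _ _ _ hst); exact/asboolP.
by rewrite addrC addrK.
Qed.


Lemma w_le_wmax (k : 'I_n) : (w T k <= wmax T)%N.
Proof. by rewrite /wmax; apply: (leq_bigmax k). Qed.

Lemma comb (i j : 'I_n) s t : j != i -> backlogged_period T i s t ->
  (w T i * (count (inW j s t) (iota 0 (np T j)) - w T j) <=
   w T j * count (inW i s t) (iota 0 (np T i)))%N.
Proof.
move=> hji hb.
have hst : s <= t by case: hb.
case: (posnP (count (inW j s t) (iota 0 (np T j)))) => [->|hpos].
  by rewrite sub0n muln0.
pose P := fun p => (p < np T j)%N && inW j s t p.
have exP : exists p, P p.
  move: hpos; rewrite -has_count => /hasP [p]; rewrite mem_iota add0n => /andP[_ hp] hq.
  by exists p; rewrite /P hp hq.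
have ubP : forall p, P p -> (p <= np T j)%N by move=> p /andP[h _]; exact: ltnW.
case: (ex_minnP exP) => p1 hP1 hmin.
case: (ex_maxnP exP ubP) => pN hPN hmax.
have hp1N : (p1 <= pN)%N by apply: hmin.
move: hP1 => /andP[hp1 hq1]; move: hPN => /andP[hpN hqN].
move: hq1 => /andP[/asboolP [m1 [tx1 k1 sb1 fin1]] nd1].
move: hqN => /andP[/asboolP [mN [txN kN sbN finN]] ndN].
have sfin1 : s <= fin T m1.
  rewrite leNgt; apply/negP => h; move/asboolP: nd1; apply; by exists m1; split.
have sfinN : s <= fin T mN.
  rewrite leNgt; apply/negP => h; move/asboolP: ndN; apply; by exists mN; split.
have hm : (m1 <= mN)%N.
  rewrite leqNgt; apply/negP => h; have := sb_lt _ _ _ h txN kN; rewrite sb1 sbN; by rewrite ltnNge hp1N.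
have hn : (0 < n)%N := leq_ltn_trans (leq0n _) (ltn_ord i).
have hwpos : forall k : 'I_n, (0 < w T k)%N by case: HT.
have hij : (val i != val j) by rewrite eq_sym.
have ka := @key_arith n (wmax T) (w T i) (w T j) i j m1 mN hn (hwpos i) (hwpos j)
  (w_le_wmax i) (w_le_wmax j) (ltn_ord i) (ltn_ord j) hij hm (tx_elig _ _ tx1 k1) (tx_elig _ _ txN kN).
set Ej := count _ (iota m1 _) in ka.
set Ii := count _ (iota m1.+1 _) in ka.
have ha : (count (inW j s t) (iota 0 (np T j)) <= Ej)%N.
  rewrite -size_filter /Ej -size_filter -[X in (_ <= X)%N](size_map (served_before T j)).
  apply: uniq_leq_size; first by apply: filter_uniq; exact: iota_uniq.
  move=> p; rewrite mem_filter mem_iota add0n => /andP[hQ /andP[_ hp]].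
  have hQ' := hQ; move: hQ => /andP[/asboolP [mp [txp kp sbp finp]] _].
  apply/mapP; exists mp; last by rewrite sbp.
  rewrite mem_filter mem_iota; apply/andP; split; first exact: (tx_elig _ _ txp kp).
  have hPp : P p by rewrite /P hp hQ'.
  have l1 : (m1 <= mp)%N.
    rewrite leqNgt; apply/negP => h; have := sb_lt _ _ _ h txp kp; rewrite sb1 sbp.
    by rewrite ltnNge (hmin p hPp).
  have l2 : (mp <= mN)%N.
    rewrite leqNgt; apply/negP => h; have := sb_lt _ _ _ h txN kN; rewrite sbN sbp.
    by rewrite ltnNge (hmax p hPp).
  rewrite l1 /=; move: l1 l2; clear; lia.
have mid : forall x, (m1 < x)%N -> (x < mN)%N -> eligible T i x ->
    [/\ tx T x, (x %% n)%N = i, s <= vis T x & fin T x < t].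
  move=> x h1 h2 he.
  have sv : s <= vis T x := le_trans sfin1 (fin_vis _ _ tx1 h1).
  have vt : vis T x < t := le_lt_trans (vis_mono _ _ (ltnW h2)) (le_lt_trans (vis_fin mN) finN).
  have tx' := busy _ _ _ _ hb he sv vt.
  move: he => /andP[/eqP hk _]; split => //.
  exact: le_lt_trans (fin_vis _ _ tx' h2) (le_lt_trans (vis_fin mN) finN).
have hb2 : (Ii <= count (inW i s t) (iota 0 (np T i)))%N.
  rewrite /Ii -size_filter -(size_map (served_before T i)) -size_filter.
  apply: uniq_leq_size.
    rewrite map_inj_in_uniq; first by apply: filter_uniq; exact: iota_uniq.
    move=> x y; rewrite !mem_filter !mem_iota => /andP[ex hx] /andP[ey hy] e.
    have [hx1 hx2] := mid_range _ _ _ hm hx; have [hy1 hy2] := mid_range _ _ _ hm hy.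
    have [tx_ kx _ _] := mid x hx1 hx2 ex.
    have [ty ky _ _] := mid y hy1 hy2 ey.
    exact: (sb_inj _ _ _ tx_ kx ty ky e).
  move=> p /mapP [x]; rewrite mem_filter mem_iota => /andP[ex hx] ->.
  have [hx1 hx2] := mid_range _ _ _ hm hx.
  have [tx_ kx svx fx] := mid x hx1 hx2 ex.
  have [hnp _] := tx_pkt _ _ tx_ kx.
  rewrite mem_filter mem_iota add0n hnp andbT /inW leq0n andbT; apply/andP; split.
    by apply/asboolP; exists x; split.
  apply/negP => /asboolP [m'' [t'' k'' sb'' f'']].
  have e := sb_inj _ _ _ t'' k'' tx_ kx sb''; subst m''.
  have := lt_le_trans f'' (le_trans svx (vis_fin x)); by rewrite ltxx.
apply: (leq_trans (leq_mul (leqnn _) (leq_sub2r _ ha))).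
apply: (leq_trans ka); exact: (leq_mul (leqnn _) hb2).
Qed.

End Sys.

Theorem mainTheorem4 (R : realType) (n : nat) (T : iwrr R n) (HT : valid T)
  (i j : 'I_n) (hji : j != i) (s t : R) (hb : backlogged_period T i s t) :
  pos_part (Dint T j s t - (w T j)%:R * lmax T j) / ((w T j)%:R * lmax T j)
  <= Dint T i s t / ((w T i)%:R * lmin T i).
Proof.
have hst : s <= t by case: hb.
have hc := @comb _ _ _ HT i j s t hji hb.
rewrite !(@Dint_sum _ _ T _ _ _ hst).
have hl : forall k : 'I_n, 0 < lmin T k /\ lmin T k <= lmax T k by case: HT => _ [].
have hlen : forall (k : 'I_n) p, (p < np T k)%N -> lmin T k <= len T k p <= lmax T k.
  by case: HT => _ [_ [h _]].
have hwpos : forall k : 'I_n, (0 < w T k)%N by case: HT.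
have /andP[_ hSj] := @sum_ord_bounds R _ (inW _ _ T j s t) (len T j) _ _ (hlen j).
have /andP[hSi _] := @sum_ord_bounds R _ (inW _ _ T i s t) (len T i) _ _ (hlen i).
set Sj := \sum_(_ < _ | _) _ in hSj *.
set Si := \sum_(_ < _ | _) _ in hSi *.
set Nj := count _ _ in hSj hc.
set Ni := count _ (iota 0 (np T i)) in hSi hc.
have [li0 _] := hl i.
have [lj0 ljj] := hl j.
have lj : 0 < lmax T j := lt_le_trans lj0 ljj.
have wi0 : 0 < (w T i)%:R :> R by rewrite ltr0n.
have wj0 : 0 < (w T j)%:R :> R by rewrite ltr0n.
have a0 : 0 < (w T j)%:R * lmax T j by rewrite mulr_gt0.
have b0 : 0 < (w T i)%:R * lmin T i by rewrite mulr_gt0.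
have Si0 : 0 <= Si by apply: le_trans hSi; rewrite mulr_ge0 // ltW.
rewrite /pos_part; case: (leP (Sj - (w T j)%:R * lmax T j) 0) => hpos.
  by rewrite mul0r divr_ge0 // ltW.
have hN : (w T j < Nj)%N.
  rewrite -(ltr_nat R); rewrite -(ltr_pM2r lj); apply: lt_le_trans hSj; by rewrite -subr_gt0.
have hcR : (w T i)%:R * (Nj%:R - (w T j)%:R) <= (w T j)%:R * Ni%:R :> R.
  by rewrite -natrB ?(ltnW hN) // -!natrM ler_nat.
rewrite ler_pdivlMr // mulrAC ler_pdivrMr //.
have f1 : (Sj - (w T j)%:R * lmax T j) * ((w T i)%:R * lmin T i) <=
   ((Nj%:R - (w T j)%:R) * lmax T j) * ((w T i)%:R * lmin T i).
  apply: ler_wpM2r; [exact: ltW | rewrite mulrBl; lra].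
have f2 : ((w T i)%:R * (Nj%:R - (w T j)%:R)) * (lmax T j * lmin T i) <=
   ((w T j)%:R * Ni%:R) * (lmax T j * lmin T i).
  by rewrite ler_wpM2r // mulr_ge0 // ltW.
have f3 : ((w T j)%:R * lmax T j) * (Ni%:R * lmin T i) <= ((w T j)%:R * lmax T j) * Si.
  by rewrite ler_wpM2l // ltW.
lra.
Qed.
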